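(* Let $\mathcal G$ be a doubly connected molecular graph. Construct $\mathcal G_{new}$ from $\mathcal G$ as follows: add a new molecule $\mathcal M_{new}$; replace a diffusive edge $b_0$ of $\mathcal G$ joining molecules $\mathcal M_1$ and $\mathcal M_2$ by two diffusive edges, $b_1$ joining $\mathcal M_1$ and $\mathcal M_{new}$ and $b_2$ joining $\mathcal M_2$ and $\mathcal M_{new}$; and add a diffusive edge $b_3$ joining $\mathcal M_{new}$ and a molecule $\mathcal M_3$ of $\mathcal G$. If a blue solid edge is redundant in $\mathcal G$, then it is also redundant in $\mathcal G_{new}$.
   Context: A molecular graph is a finite multigraph whose vertices are called molecules and each of whose edges joins two distinct molecules and is either a diffusive edge or a blue solid edge (parallel edges are allowed). A molecular graph is doubly connected if there exist two disjoint sets of edges, $\mathcal B_{black}$ consisting only of diffusive edges and $\mathcal B_{blue}$ consisting only of blue solid or diffusive edges, such that each of $\mathcal B_{black}$ and $\mathcal B_{blue}$ contains a spanning tree of the set of all molecules. A blue solid edge $e$ of a doubly connected graph is redundant if the graph obtained by deleting $e$ is still doubly connected. *)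

(* Defs.v *)
From mathcomp Require Import all_boot.
Set Implicit Arguments. Unset Strict Implicit. Unset Printing Implicit Defensive.

(* A molecular graph: finite multigraph with molecules mV and edges mE.
   Each edge e joins msrc e and mdst e; mdiff e = true iff e is a diffusive
   edge, false iff it is a blue solid edge. *)
Record mgraph := MGraph {
  mV : finType;
  mE : finType;
  msrc : mE -> mV;
  mdst : mE -> mV;
  mdiff : mE -> bool }.

Definition mwf (G : mgraph) : Prop := forall e : mE G, msrc e != mdst e.

Definition adj (G : mgraph) (S : {set mE G}) : rel (mV G) :=
  fun x y => [exists e in S, ((msrc e == x) && (mdst e == y))
                          || ((msrc e == y) && (mdst e == x))].

Definition connects (G : mgraph) (S : {set mE G}) : Prop :=
  forall x y : mV G, connect (adj S) x y.

Definition spanning_tree (G : mgraph) (T : {set mE G}) : Prop :=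
  connects T /\ forall e, e \in T -> ~ connects (T :\ e).

Definition contains_spanning_tree (G : mgraph) (B : {set mE G}) : Prop :=
  exists T : {set mE G}, T \subset B /\ spanning_tree T.

Definition doubly_connected (G : mgraph) : Prop :=
  exists Bblack Bblue : {set mE G},
    [disjoint Bblack & Bblue] /\
    (forall e, e \in Bblack -> mdiff e) /\
    (* Bblue consists of blue solid or diffusive edges: no restriction *)
    contains_spanning_tree Bblack /\ contains_spanning_tree Bblue.

Definition delete_edge (G : mgraph) (e0 : mE G) : mgraph :=
  @MGraph (mV G) {e : mE G | e != e0}
    (fun e => msrc (val e)) (fun e => mdst (val e)) (fun e => mdiff (val e)).

Definition redundant (G : mgraph) (e : mE G) : Prop :=
  doubly_connected G /\ mdiff e = false /\ doubly_connected (delete_edge e).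

(* G_new: new molecule None; edge b0 (joining M1 = msrc b0, M2 = mdst b0)
   replaced by b1 = inr 0 (M1 -- new), b2 = inr 1 (M2 -- new), and
   b3 = inr 2 (new -- M3), all diffusive. *)
Definition new_src (G : mgraph) (b0 : mE G) (M3 : mV G)
  (e : ({e : mE G | e != b0} + 'I_3)%type) : option (mV G) :=
  match e with
  | inl x => Some (msrc (val x))
  | inr i => if val i == 0 then Some (msrc b0)
             else if val i == 1 then Some (mdst b0) else None
  end.

Definition new_dst (G : mgraph) (b0 : mE G) (M3 : mV G)
  (e : ({e : mE G | e != b0} + 'I_3)%type) : option (mV G) :=
  match e with
  | inl x => Some (mdst (val x))
  | inr i => if val i == 2 then Some M3 else None
  end.

Definition new_diff (G : mgraph) (b0 : mE G)
  (e : ({e : mE G | e != b0} + 'I_3)%type) : bool :=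
  match e with
  | inl x => mdiff (val x)
  | inr _ => true
  end.

Definition Gnew (G : mgraph) (b0 : mE G) (M3 : mV G) : mgraph :=
  @MGraph (option (mV G))
    ({e : mE G | e != b0} + 'I_3)%type
    (new_src M3) (new_dst M3) (@new_diff G b0).

(* Main.v *)
Require Import Defs.
From mathcomp Require Import all_boot.

Lemma disjP (T : finType) (A B : {set T}) :
  (forall x, x \in A -> x \in B -> False) <-> [disjoint A & B].
Proof.
rewrite -setI_eq0; split; last first.
  move=> /eqP H x xA xB; suff : x \in (set0 : {set T}) by rewrite inE.
  by rewrite -H inE xA xB.
move=> H; apply/eqP/setP=> x; rewrite !inE; apply/negP=> /andP[xA xB]; exact: H x xA xB.
Qed.

Lemma adj_sym (G : mgraph) (S : {set mE G}) : symmetric (adj S).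
Proof.
move=> x y; apply/existsP/existsP=> [][f /andP[fS H]]; exists f; rewrite fS /=;
  by rewrite orbC.
Qed.

Lemma adj_mono (G : mgraph) (S S' : {set mE G}) : S \subset S' ->
  forall x y, adj S x y -> adj S' x y.
Proof.
move=> sub x y /existsP[f /andP[fS H]]; apply/existsP; exists f.
by rewrite (subsetP sub _ fS).
Qed.

Lemma connects_mono (G : mgraph) (S S' : {set mE G}) : S \subset S' ->
  connects S -> connects S'.
Proof.
move=> sub c x y; apply: connect_sub (c x y) => u v h; apply: connect1.
exact: adj_mono h.
Qed.

Lemma cst_iff (G : mgraph) (B : {set mE G}) : contains_spanning_tree B <-> connects B.
Proof.
split.
  by move=> [T [sub [c _]]]; exact: connects_mono c.
move=> c.
pose P := fun T : {set mE G} => (T \subset B) && [forall x, [forall y, connect (adj T) x y]].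
have PB : P B.
  by rewrite /P subxx /=; apply/forallP=> x; apply/forallP=> y; exact: c.
have [T /minsetP [/andP [sub cT] mn]] := ex_minset (ex_intro P B PB).
have cT' : connects T by move=> x y; move/forallP: cT => /(_ x) /forallP; apply.
exists T; split=> //; split=> // f fT cf.
have PTf : P (T :\ f).
  rewrite /P (subset_trans _ sub) ?subD1set //.
  by apply/forallP=> x; apply/forallP=> y; exact: cf.
have := mn _ PTf (subD1set T f).
by move/setP/(_ f); rewrite !inE eqxx fT.
Qed.

Definition dcA (G : mgraph) (A : {set mE G}) : Prop :=
  exists Bk Bb : {set mE G}, Bk \subset A /\ Bb \subset A /\
    [disjoint Bk & Bb] /\ (forall e, e \in Bk -> mdiff e) /\
    connects Bk /\ connects Bb.

Lemma dc_iff (G : mgraph) : doubly_connected G <-> @dcA G setT.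
Proof.
split.
  move=> [Bk [Bb [d [df [/cst_iff ck /cst_iff cb]]]]].
  by exists Bk, Bb; rewrite !subsetT.
move=> [Bk [Bb [_ [_ [d [df [ck cb]]]]]]].
by exists Bk, Bb; split=> //; split=> //; split; apply/cst_iff.
Qed.

Lemma adj_del (G : mgraph) (e0 : mE G) (S : {set mE (delete_edge e0)}) :
  adj S =2 @adj G [set val x | x in S].
Proof.
move=> x y; apply/existsP/existsP.
  by move=> [f /andP[fS H]]; exists (val f); rewrite imset_f.
move=> [f /andP[/imsetP[g gS ->] H]]; exists g; by rewrite gS.
Qed.

Lemma dc_del (G : mgraph) (e0 : mE G) :
  doubly_connected (delete_edge e0) <-> @dcA G [set~ e0].
Proof.
split.
  move=> /dc_iff [Bk [Bb [_ [_ [d [df [ck cb]]]]]]].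
  exists [set val x | x in Bk], [set val x | x in Bb].
  split; first by apply/subsetP=> f /imsetP[g _ ->]; rewrite in_setC1 (valP g).
  split; first by apply/subsetP=> f /imsetP[g _ ->]; rewrite in_setC1 (valP g).
  split.
    apply/disjP => f /imsetP[g gk ->] /imsetP[h hb /val_inj E]; subst h.
    exact: ((disjP _ _ _).2 d _ gk hb).
  split; first by move=> f /imsetP[g gk ->]; exact: df.
  split=> x y; rewrite -(eq_connect (adj_del _ _ _)); [exact: ck | exact: cb].
move=> [Bk [Bb [sk [sb [d [df [ck cb]]]]]]]; apply/dc_iff.
pose Bk' := [set x : mE (delete_edge e0) | val x \in Bk].
pose Bb' := [set x : mE (delete_edge e0) | val x \in Bb].
have imk : [set val x | x in Bk'] = Bk.
  apply/setP=> f; apply/imsetP/idP=> [[g] | fk]; first by rewrite inE => gk ->.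
  have nf : f != e0 by have := subsetP sk _ fk; rewrite in_setC1.
  by exists (exist _ f nf); rewrite // inE.
have imb : [set val x | x in Bb'] = Bb.
  apply/setP=> f; apply/imsetP/idP=> [[g] | fk]; first by rewrite inE => gk ->.
  have nf : f != e0 by have := subsetP sb _ fk; rewrite in_setC1.
  by exists (exist _ f nf); rewrite // inE.
exists Bk', Bb'; rewrite !subsetT; split=> //; split=> //; split.
  by apply/disjP => f; rewrite !inE => fk fb; exact: ((disjP _ _ _).2 d _ fk fb).
split; first by move=> f; rewrite inE => /df.
split=> x y; rewrite (eq_connect (adj_del _ _ _)) ?imk ?imb; [exact: ck | exact: cb].
Qed.

Section Core.
Variables (G : mgraph) (b0 : mE G) (M3 : mV G).
Local Notation GN := (Gnew b0 M3).

Definition mk (S : {set mE G}) (c : bool) : {set mE GN} :=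
  [set x : mE GN | match x with inl y => val y \in S
                   | inr i => if c then val i < 2 else val i == 2 end].

Definition o0 : 'I_3 := @Ordinal 3 0 isT.
Definition o1 : 'I_3 := @Ordinal 3 1 isT.
Definition o2 : 'I_3 := @Ordinal 3 2 isT.

Lemma conn_mk (S : {set mE G}) (c : bool) : (b0 \in S -> c) -> connects S -> connects (mk S c).
Proof.
move=> hc cS.
have step : forall x y, adj S x y -> connect (adj (mk S c)) (Some x) (Some y).
  move=> x y /existsP[f /andP[fS H]].
  case: (eqVneq f b0) => [fb|fn].
    subst f; have -> : c = true by exact: hc fS.
    have a0 : adj (mk S true) (Some (msrc b0)) None.
      by apply/existsP; exists (inr o0); rewrite inE /= eqxx.
    have a1 : adj (mk S true) (Some (mdst b0)) None.
      by apply/existsP; exists (inr o1); rewrite inE /= eqxx.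
    have sy := @adj_sym GN (mk S true).
    case/orP: H => /andP[/eqP <- /eqP <-].
      by apply: connect_trans (connect1 a0) _; apply: connect1; rewrite sy.
    by apply: connect_trans (connect1 a1) _; apply: connect1; rewrite sy.
  apply: connect1; apply/existsP; exists (inl (exist _ f fn)); rewrite inE /= fS /=.
  by case/orP: H => /andP[/eqP -> /eqP ->]; rewrite !eqxx ?orbT.
have lift : forall x y, connect (adj (mk S c)) (Some x) (Some y).
  move=> x y; move/connectP: (cS x y) => [p pth ->] {y}.
  elim: p x pth => [|z p IH] x /=; first by rewrite connect0.
  by move/andP=> [h pth]; apply: connect_trans (step _ _ h) (IH _ pth).
have [w aw] : exists w, adj (mk S c) None (Some w).
  case: c {hc step lift}.
    exists (msrc b0); apply/existsP; exists (inr o0); rewrite inE /=.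
    by rewrite !eqxx.
  exists M3. apply/existsP. exists (inr o2). rewrite inE /=. by rewrite eqxx.
have sy := @adj_sym GN (mk S c).
have symc := sym_connect_sym sy.
case=> [x|] [y|]; first exact: lift.
- by rewrite symc; apply: connect_trans (connect1 aw) (lift _ _).
- by apply: connect_trans (connect1 aw) (lift _ _).
- exact: connect0.
Qed.

Definition liftA (A : {set mE G}) : {set mE GN} :=
  [set x : mE GN | match x with inl y => val y \in A | inr _ => true end].

Lemma dcA_new (A : {set mE G}) : mdiff b0 -> dcA G A -> @dcA GN (liftA A).
Proof.
move=> hb [Bk [Bb [sk [sb [d [df [ck cb]]]]]]].
have dsj : forall (S T : {set mE G}) (c c' : bool), [disjoint S & T] -> c != c' -> [disjoint mk S c & mk T c'].
  move=> S T c c' dST ne; apply/disjP => -[y|i]; rewrite !inE.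
    exact: (disjP _ _ _).2 dST _.
  by case: c c' ne => [] [] //= _; [move=> h /eqP e | move=> /eqP e h]; rewrite e in h.
have sub : forall (S : {set mE G}) (c : bool), S \subset A -> mk S c \subset liftA A.
  move=> S c sSA; apply/subsetP => -[y|i]; rewrite !inE //; exact: subsetP sSA _.
have dif : forall (S : {set mE G}) (c : bool), (forall e, e \in S -> mdiff e) -> forall x, x \in mk S c -> mdiff x.
  by move=> S c h [y|i]; rewrite inE //=; exact: h.
have nb : b0 \in Bk -> b0 \in Bb -> false.
  by move=> h1 h2; case: ((disjP _ _ _).2 d _ h1 h2).
case: (boolP (b0 \in Bk)) => hk.
  exists (mk Bk true), (mk Bb false).
  do !split; [exact: sub | exact: sub | exact: dsj | exact: dif | | ].
    exact: conn_mk.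
  by apply: conn_mk => // h; apply: nb.
exists (mk Bk false), (mk Bb true).
do !split; [exact: sub | exact: sub | exact: dsj | exact: dif | | ].
  by apply: conn_mk => // h; rewrite h in hk.
exact: conn_mk.
Qed.
End Core.

Theorem claimA7 (G : mgraph) (b0 : mE G) (M3 : mV G) (e : mE G)
  (hwf : mwf G) (hdc : doubly_connected G) (hb0 : mdiff b0 = true)
  (hne : e != b0) :
  redundant e -> redundant (inl (exist _ e hne) : mE (Gnew b0 M3)).
Proof.
move=> [_ [he hdel]].
split.
  apply/dc_iff; move: (dcA_new _ _ M3 _ hb0 ((dc_iff G).1 hdc)).
  move=> [Bk [Bb [sk [sb H]]]]; exists Bk, Bb; by rewrite !subsetT.
split; first exact: he.
apply/dc_del; move: (dcA_new _ _ M3 _ hb0 ((dc_del _ e).1 hdel)).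
move=> [Bk [Bb [sk [sb H]]]]; exists Bk, Bb.
have s : liftA _ b0 M3 [set~ e] \subset [set~ (inl (exist _ e hne) : mE (Gnew b0 M3))].
  apply/subsetP => -[y|i]; rewrite !inE //.
by split; [exact: subset_trans sk s | split; [exact: subset_trans sb s | exact: H]].
Qed.
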